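(* For the step set $\mathcal A$ and for both $t_0=\tfrac12$ and $t_0=-\tfrac12$, $$Q_{\mathcal A}(x,0,t_0)=\sum_{n\ge0}\frac{T_n}{4^n}x^{2n},$$ where $(T_n)_{n\ge0}=(1,2,16,272,7936,\dots)$ is the sequence of tangent numbers, defined by $\tan x=\sum_{n\ge0}T_n\frac{x^{2n+1}}{(2n+1)!}$. Equivalently, $$Q_{\mathcal A}(x,0,\tfrac12)=2\sum_{n\ge0}(2^{2n+2}-1)\frac{(-1)^n}{n+1}B_{2n+2}x^{2n},$$ where $(B_n)_{n\ge0}$ are the Bernoulli numbers.
   Context: Let $\mathbb N=\{0,1,2,\dots\}$ and $\mathcal A=\{(-1,1),(1,1),(1,-1)\}$. $\#_{\mathcal A}\{(0,0)\xrightarrow{n}(i,j)\}$ is the number of sequences $p_0=(0,0),p_1,\dots,p_n=(i,j)$ of points of $\mathbb N^2$ with $p_m-p_{m-1}\in\mathcal A$. For $t_0\in\{\tfrac12,-\tfrac12\}$, $Q_{\mathcal A}(x,0,t_0)=\sum_{i\ge0}\big(\sum_{n\ge0}\#_{\mathcal A}\{(0,0)\xrightarrow{n}(i,0)\}t_0^n\big)x^i$ (the inner series converge). Bernoulli numbers are defined by $\sum_{n\ge0}B_n\frac{x^n}{n!}=\frac{x}{e^x-1}$. *)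

(* Defs.v *)
From Stdlib Require Import Reals ZArith List Arith.
From Coquelicot Require Import Coquelicot.
Import ListNotations.
Open Scope R_scope.

Inductive step := SW_NE | S_NE | S_SE .
Definition steps : list step := [SW_NE; S_NE; S_SE].
Definition dx (s : step) : Z := match s with SW_NE => (-1)%Z | S_NE => 1%Z | S_SE => 1%Z end.
Definition dy (s : step) : Z := match s with SW_NE => 1%Z | S_NE => 1%Z | S_SE => (-1)%Z end.

Fixpoint words (n : nat) : list (list step) :=
  match n with
  | O => [[]]
  | S m => flat_map (fun w => map (fun s => w ++ [s]) steps) (words m)
  end.

Fixpoint run (x y : Z) (w : list step) : option (Z * Z) :=
  match w with
  | [] => Some (x, y)
  | s :: w' =>
      let x' := (x + dx s)%Z in let y' := (y + dy s)%Z in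
      if andb (Z.leb 0 x') (Z.leb 0 y') then run x' y' w' else None
  end.

Definition ends_at (i j : nat) (w : list step) : bool :=
  match run 0%Z 0%Z w with
  | Some (x, y) => andb (Z.eqb x (Z.of_nat i)) (Z.eqb y (Z.of_nat j))
  | None => false
  end.

Definition nwalks (n i j : nat) : nat := length (filter (ends_at i j) (words n)).

Definition tangent_number (n : nat) : R := Derive_n tan (2 * n + 1) 0.

(* Bernoulli numbers: x/(e^x - 1) = sum_n B_n x^n / n!, the generating function
   extended by continuity (value 1) at 0; B_n is its n-th derivative at 0. *)
Definition bern_gf (x : R) : R := if Req_EM_T x 0 then 1 else x / (exp x - 1).
Definition bernoulli (n : nat) : R := Derive_n bern_gf n 0.

(* Coefficient of x^i in sum_n T_n/4^n x^(2n). *)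
Definition tan_coef (i : nat) : R :=
  if Nat.even i then tangent_number (Nat.div2 i) / 4 ^ (Nat.div2 i) else 0.

(* Coefficient of x^i in 2 sum_n (2^(2n+2)-1) (-1)^n/(n+1) B_(2n+2) x^(2n). *)
Definition bern_coef (i : nat) : R :=
  let k := Nat.div2 i in
  if Nat.even i then
    2 * (2 ^ (2 * k + 2) - 1) * (-1) ^ k / INR (k + 1) * bernoulli (2 * k + 2)
  else 0.

(* Main.v *)
Require Import Defs.
From Stdlib Require Import Reals.
From Coquelicot Require Import Coquelicot.
Open Scope R_scope.
From Stdlib Require Import ZArith List Arith Lia Lra FunctionalExtensionality.
Import ListNotations.
Open Scope R_scope.

Lemma run_nonneg : forall w x y p q, (0 <= x)%Z -> (0 <= y)%Z ->
  run x y w = Some (p,q) -> (0 <= p)%Z /\ (0 <= q)%Z.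
Proof.
  induction w as [|s w IH]; simpl; intros x y p q Hx Hy H.
  - inversion H; subst; split; assumption.
  - destruct (andb (Z.leb 0 (x + dx s)) (Z.leb 0 (y + dy s))) eqn:E; [|discriminate].
    apply andb_prop in E as [E1 E2]. apply Z.leb_le in E1. apply Z.leb_le in E2.
    exact (IH _ _ _ _ E1 E2 H).
Qed.

Lemma run_app : forall w s x y, run x y (w ++ [s]) =
  match run x y w with
  | Some (a,b) => if andb (Z.leb 0 (a + dx s)) (Z.leb 0 (b + dy s))
                  then Some (a + dx s, b + dy s)%Z else None
  | None => None end.
Proof.
  induction w as [|s' w IH]; intros s x y; simpl.
  - reflexivity.
  - destruct (andb _ _); [apply IH | reflexivity].
Qed.

Ltac zfin := repeat (first [ match goal with |- context [Z.leb ?x ?y] => destruct (Z.leb_spec x y) end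
                | match goal with |- context [Z.eqb ?x ?y] => destruct (Z.eqb_spec x y) end ]; simpl);
  try reflexivity; try lia.

Lemma ends_SW : forall a b w, ends_at a b (w ++ [SW_NE]) =
  match b with 0%nat => false | S b' => ends_at (S a) b' w end.
Proof.
  intros a b w. unfold ends_at. rewrite run_app.
  destruct (run 0 0 w) as [[p q]|] eqn:E.
  - pose proof (run_nonneg _ _ _ _ _ (Z.le_refl 0) (Z.le_refl 0) E) as [Hp Hq]. simpl dx; simpl dy.
    destruct b as [|b']; zfin.
  - destruct b; reflexivity.
Qed.

Lemma ends_NE : forall a b w, ends_at a b (w ++ [S_NE]) =
  match a, b with S a', S b' => ends_at a' b' w | _, _ => false end.
Proof.
  intros a b w. unfold ends_at. rewrite run_app.
  destruct (run 0 0 w) as [[p q]|] eqn:E.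
  - pose proof (run_nonneg _ _ _ _ _ (Z.le_refl 0) (Z.le_refl 0) E) as [Hp Hq]. simpl dx; simpl dy.
    destruct a as [|a']; destruct b as [|b']; zfin.
  - destruct a; destruct b; reflexivity.
Qed.

Lemma ends_SE : forall a b w, ends_at a b (w ++ [S_SE]) =
  match a with 0%nat => false | S a' => ends_at a' (S b) w end.
Proof.
  intros a b w. unfold ends_at. rewrite run_app.
  destruct (run 0 0 w) as [[p q]|] eqn:E.
  - pose proof (run_nonneg _ _ _ _ _ (Z.le_refl 0) (Z.le_refl 0) E) as [Hp Hq]. simpl dx; simpl dy.
    destruct a as [|a']; zfin.
  - destruct a; reflexivity.
Qed.

Definition ind (b : bool) : nat := if b then 1%nat else 0%nat.

Lemma len_filter : forall {A} (P : A -> bool) l, length (filter P l) = list_sum (map (fun w => ind (P w)) l).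
Proof. induction l; simpl; auto. destruct (P a); simpl; lia. Qed.

Lemma list_sum_map_plus : forall {A} (f g : A -> nat) l,
  list_sum (map (fun w => (f w + g w)%nat) l) = (list_sum (map f l) + list_sum (map g l))%nat.
Proof. induction l; simpl; auto. lia. Qed.

Lemma list_sum_map_0 : forall {A} (l : list A), list_sum (map (fun _ => 0%nat) l) = 0%nat.
Proof. induction l; simpl; auto. Qed.

Lemma nwalks_S : forall n a b, nwalks (S n) a b =
  ((match b with 0%nat => 0%nat | S b' => nwalks n (S a) b' end) +
  (match a, b with S a', S b' => nwalks n a' b' | _, _ => 0%nat end) +
  (match a with 0%nat => 0%nat | S a' => nwalks n a' (S b) end))%nat.
Proof.
  intros n a b. unfold nwalks. simpl words.
  rewrite len_filter.
  assert (H: forall l, list_sum (map (fun w => ind (ends_at a b w))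
     (flat_map (fun w => map (fun s => w ++ [s]) steps) l)) =
     list_sum (map (fun w => (ind (ends_at a b (w ++ [SW_NE])) + ind (ends_at a b (w ++ [S_NE]))
        + ind (ends_at a b (w ++ [S_SE])))%nat) l)).
  { induction l as [|w l IH]; simpl; auto. unfold steps in IH. simpl in IH. rewrite IH. lia. }
  rewrite H. rewrite !list_sum_map_plus.
  setoid_rewrite ends_SW. setoid_rewrite ends_NE. setoid_rewrite ends_SE.
  destruct a as [|a']; destruct b as [|b']; simpl; rewrite ?list_sum_map_0, ?len_filter; lia.
Qed.

Lemma nwalks_0 : forall a b, nwalks 0 a b = match a, b with 0%nat, 0%nat => 1%nat | _, _ => 0%nat end.
Proof. intros [|a] [|b]; reflexivity. Qed.

Fixpoint Cb (n k : nat) : R :=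
  match n, k with
  | _, 0%nat => 1
  | 0%nat, S _ => 0
  | S n', S k' => Cb n' k' + Cb n' (S k')
  end.

Lemma Cb_S_S n k : Cb (S n) (S k) = Cb n k + Cb n (S k).
Proof. reflexivity. Qed.

Lemma Cb_1 n : Cb n 1 = INR n.
Proof. induction n; simpl Cb; [reflexivity|]. rewrite IHn, S_INR. destruct n; simpl; lra. Qed.

Lemma Cb_big : forall n k, (n < k)%nat -> Cb n k = 0.
Proof.
  induction n; intros k H; destruct k; try lia; simpl; auto.
  rewrite !IHn; lia || lra.
Qed.

Lemma Cb_diff2 n k : Cb (S (S n)) (S (S k)) - 2 * Cb (S n) (S (S k)) + Cb n (S (S k)) = Cb n k.
Proof. rewrite !Cb_S_S. lra. Qed.

Lemma Cb_fact : forall n k, (k <= n)%nat -> Cb n k = Binomial.C n k.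
Proof.
  induction n; intros k H.
  - destruct k; [|lia]. rewrite C_n_0. reflexivity.
  - destruct k.
    + rewrite C_n_0. reflexivity.
    + rewrite Cb_S_S. destruct (Nat.eq_dec k n) as [->|Hk].
      * rewrite (Cb_big n (S n)) by lia. rewrite IHn by lia. rewrite !C_n_n. lra.
      * rewrite !IHn by lia. apply pascal. lia.
Qed.

Definition A (t : nat -> R) (m n : nat) : R :=
  sum_f_R0 (fun i => (-1) ^ (m - i) * t i * Cb n (2 * (m - i) + 1)) m.

Lemma sum_lin3 : forall f g h N, sum_f_R0 f N - 2 * sum_f_R0 g N + sum_f_R0 h N =
  sum_f_R0 (fun i => f i - 2 * g i + h i) N.
Proof. induction N; simpl; [lra|]. rewrite <- IHN. lra. Qed.

Lemma sum_opp' : forall f N, sum_f_R0 (fun i => - f i) N = - sum_f_R0 f N.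
Proof. induction N; simpl; [lra|]. rewrite IHN. lra. Qed.

Lemma A_diff2 t m n : A t (S m) (S (S n)) - 2 * A t (S m) (S n) + A t (S m) n = - A t m n.
Proof.
  unfold A. rewrite sum_lin3. rewrite tech5.
  replace (S m - S m)%nat with 0%nat by lia. rewrite pow_O.
  replace (2 * 0 + 1)%nat with 1%nat by lia. rewrite !Cb_1, !S_INR.
  rewrite <- sum_opp'.
  rewrite (sum_eq _ (fun i => - ((-1) ^ (m - i) * t i * Cb n (2 * (m - i) + 1)))).
  { lra. }
  intros i Hi. replace (S m - i)%nat with (S (m - i)) by lia.
  replace (2 * S (m - i) + 1)%nat with (S (S (2 * (m - i) + 1))) by lia.
  rewrite <- (Cb_diff2 n (2 * (m - i) + 1)). rewrite <- tech_pow_Rmult. lra.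
Qed.

Lemma A_small t m n : (n <= 2)%nat -> A t m n = t m * INR n.
Proof.
  intros Hn. unfold A. destruct m.
  - simpl. rewrite Cb_1. lra.
  - rewrite tech5. rewrite sum_eq_R0.
    + replace (S m - S m)%nat with 0%nat by lia. rewrite Cb_1. simpl. lra.
    + intros i Hi. rewrite Cb_big by lia. lra.
Qed.

Definition Bop (f : nat -> nat -> R) (a b : nat) : R :=
  / 2 * ((match b with 0%nat => 0 | S b' => f (S a) b' end) +
         (match a, b with S a', S b' => f a' b' | _, _ => 0 end) +
         (match a with 0%nat => 0 | S a' => f a' (S b) end)).

Definition dlt (a b : nat) : R := match a, b with 0%nat, 0%nat => 1 | _, _ => 0 end.

Definition Vf (t : nat -> R) (a b : nat) : R :=
  if Nat.even (a + b) then A t (Nat.div2 (a + b)) (S b) else 0.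

Lemma even_dbl m : Nat.even (2 * m) = true.
Proof. apply Nat.even_spec. exists m. reflexivity. Qed.
Lemma even_dbl1 m : Nat.even (2 * m + 1) = false.
Proof. rewrite Nat.even_add. rewrite even_dbl. reflexivity. Qed.

Lemma Vf_even t a b m : (a + b = 2 * m)%nat -> Vf t a b = A t m (S b).
Proof. intros H. unfold Vf. rewrite H, even_dbl, Nat.div2_double. reflexivity. Qed.
Lemma Vf_odd t a b m : (a + b = 2 * m + 1)%nat -> Vf t a b = 0.
Proof. intros H. unfold Vf. rewrite H, even_dbl1. reflexivity. Qed.

Definition HypI (t : nat -> R) := forall m, A t m (2 * m + 2) = 2 * (-1) ^ m.

Lemma t0_1 t : HypI t -> t 0%nat = 1.
Proof. intros H. specialize (H 0%nat). rewrite A_small in H by lia. simpl in H. lra. Qed.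

Lemma Vf_eq t (HI : HypI t) a b : Vf t a b = dlt a b + Bop (Vf t) a b.
Proof.
  unfold Bop. destruct (Nat.Even_or_Odd (a + b)) as [[m Hm]|[m Hm]].
  - destruct a as [|a']; destruct b as [|b'].
    + simpl. rewrite (Vf_even t 0 0 0) by lia. rewrite A_small by lia. rewrite t0_1 by auto. simpl. lra.
    +
      destruct m as [|m]; [lia|].
      rewrite (Vf_even t 0 (S b') (S m)) by lia. rewrite (Vf_even t 1 b' (S m)) by lia.
      simpl dlt.
      pose proof (A_diff2 t m (2 * m + 2)) as D.
      pose proof (HI (S m)) as H1. pose proof (HI m) as H2.
      replace (S b') with (S (2 * m + 1)) by lia.
      replace (S (S (2 * m + 2))) with (2 * S m + 2)%nat in D by lia.
      replace (2 * m + 2)%nat with (S (2*m+1)) in D, H2 by lia.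
      rewrite H1 in D. rewrite H2 in D. simpl pow in D. simpl dlt. lra.
    + destruct m as [|m]; [lia|].
      rewrite (Vf_even t (S a') 0 (S m)) by lia. rewrite (Vf_even t a' 1 (S m)) by lia.
      rewrite !A_small by lia. simpl dlt. simpl INR. lra.
    + destruct m as [|m]; [lia|].
      rewrite (Vf_even t (S a') (S b') (S m)) by lia.
      rewrite (Vf_even t (S (S a')) b' (S m)) by lia.
      rewrite (Vf_even t a' b' m) by lia.
      rewrite (Vf_even t a' (S (S b')) (S m)) by lia.
      pose proof (A_diff2 t m (S b')) as D. simpl dlt. lra.
  - destruct a as [|a']; destruct b as [|b'].
    + lia.
    + rewrite (Vf_odd t 0 (S b') m) by lia. rewrite (Vf_odd t 1 b' m) by lia. simpl dlt. lra.
    + rewrite (Vf_odd t (S a') 0 m) by lia. rewrite (Vf_odd t a' 1 m) by lia. simpl dlt. lra.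
    + rewrite (Vf_odd t (S a') (S b') m) by lia.
      rewrite (Vf_odd t (S (S a')) b' m) by lia.
      destruct m as [|m]; [lia|]. rewrite (Vf_odd t a' b' m) by lia.
      rewrite (Vf_odd t a' (S (S b')) (S m)) by lia. simpl dlt. lra.
Qed.

Definition wr (n a b : nat) : R := INR (nwalks n a b) * (1/2) ^ n.

Lemma wr_0 : wr 0 = dlt.
Proof. apply functional_extensionality; intro a; apply functional_extensionality; intro b.
  unfold wr. rewrite nwalks_0. destruct a; destruct b; simpl; lra. Qed.

Lemma wr_S n : wr (S n) = Bop (wr n).
Proof. apply functional_extensionality; intro a; apply functional_extensionality; intro b.
  unfold wr, Bop. rewrite nwalks_S. rewrite !plus_INR. simpl pow.
  destruct a; destruct b; simpl INR; lra. Qed.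

Fixpoint Bn (N : nat) (f : nat -> nat -> R) : nat -> nat -> R :=
  match N with 0%nat => f | S N' => Bop (Bn N' f) end.

Lemma Bop_minus f g : Bop (fun a b => f a b - g a b) = fun a b => Bop f a b - Bop g a b.
Proof. apply functional_extensionality; intro a; apply functional_extensionality; intro b.
  unfold Bop. destruct a; destruct b; lra. Qed.

Lemma Bn_minus N f g : Bn N (fun a b => f a b - g a b) = fun a b => Bn N f a b - Bn N g a b.
Proof. induction N; simpl; auto. rewrite IHN. apply Bop_minus. Qed.

Lemma Bn_comm N f : Bn (S N) f = Bn N (Bop f).
Proof. induction N; simpl; auto. simpl in IHN. rewrite IHN. reflexivity. Qed.

Lemma wr_Bn n : wr n = Bn n dlt.
Proof. induction n; simpl. apply wr_0. rewrite wr_S, IHn. reflexivity. Qed.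

Lemma Bop_Vf t (HI : HypI t) : Bop (Vf t) = fun a b => Vf t a b - dlt a b.
Proof. apply functional_extensionality; intro a; apply functional_extensionality; intro b.
  rewrite (Vf_eq t HI a b). lra. Qed.

Lemma partial_sums t (HI : HypI t) N a b :
  sum_n (fun n => wr n a b) N = Vf t a b - Bn (S N) (Vf t) a b.
Proof.
  revert a b. induction N; intros a b.
  - rewrite sum_O. simpl. rewrite Bop_Vf by auto. rewrite wr_0. lra.
  - rewrite sum_Sn. change (plus ?x ?y) with (x + y). rewrite IHN.
    rewrite (Bn_comm (S N)). rewrite Bop_Vf by auto. rewrite Bn_minus.
    rewrite wr_Bn. simpl. lra.
Qed.

Definition mu (L : nat) := INR L + 1.
Definition om (L a b : nat) : R := mu L ^ (a + b) * INR (S a) * INR (S b).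
Definition ccL (L : nat) := 1 - / (2 * (mu L * mu L)).

Lemma mu_ge1 L : 1 <= mu L.
Proof. unfold mu. pose proof (pos_INR L). lra. Qed.

Lemma om_ge1 L a b : 1 <= om L a b.
Proof. unfold om. pose proof (mu_ge1 L). pose proof (pow_R1_Rle (mu L) (a+b) H).
  rewrite !S_INR. pose proof (pos_INR a). pose proof (pos_INR b).
  assert (1 <= (INR a + 1) * (INR b + 1)) by nra. nra. Qed.

Lemma q_facts L : 0 < / (2 * (mu L * mu L)) /\ / (2 * (mu L * mu L)) * (mu L * mu L) = / 2.
Proof. pose proof (mu_ge1 L). split.
  - apply Rinv_0_lt_compat. nra.
  - field. lra. Qed.

Lemma cc_bounds L : 0 <= ccL L < 1.
Proof. unfold ccL. pose proof (mu_ge1 L). destruct (q_facts L) as [H1 H2].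
  assert (1 <= mu L * mu L) by nra. split; [|lra].
  assert (/ (2 * (mu L * mu L)) <= / 2). { apply Rinv_le_contravar; lra. } lra. Qed.

Lemma Bop_om L a b : (a + b <= L)%nat -> Bop (om L) a b <= ccL L * om L a b.
Proof.
  intros Hab. unfold Bop, ccL, om.
  pose proof (mu_ge1 L) as Hmu. assert (HL: INR a + INR b <= INR L) by (rewrite <- plus_INR; apply le_INR; lia).
  destruct (q_facts L) as [Hq HqM].
  set (q := / (2 * (mu L * mu L))) in *. set (m := mu L) in *.
  assert (Hm: m = INR L + 1) by reflexivity.
  destruct a as [|a']; destruct b as [|b'].
  - pose proof (cc_bounds L) as Hc. unfold ccL in Hc. fold m q in Hc.
    simpl. nra.
  - replace (S 0 + b')%nat with (0 + S b')%nat by lia.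
    assert (0 < m ^ (0 + S b')) by (apply pow_lt; lra).
    set (P := m ^ (0 + S b')) in *.
    rewrite !S_INR in *. simpl INR in *.
    assert (INR b' + 2 <= m) by lra.
    assert (q * (INR b' + 2) <= 1) by nra.
    nra.
  - replace (a' + S 0)%nat with (S a' + 0)%nat by lia.
    assert (0 < m ^ (S a' + 0)) by (apply pow_lt; lra).
    set (P := m ^ (S a' + 0)) in *.
    rewrite !S_INR in *. simpl INR in *.
    assert (INR a' + 2 <= m) by lra.
    assert (q * (INR a' + 2) <= 1) by nra.
    nra.
  - replace (S (S a') + b')%nat with (a' + b' + 2)%nat by lia.
    replace (a' + S (S b'))%nat with (a' + b' + 2)%nat by lia.
    replace (S a' + S b')%nat with (a' + b' + 2)%nat by lia.
    rewrite pow_add. 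
    assert (0 < m ^ (a' + b')) by (apply pow_lt; lra).
    set (P := m ^ (a' + b')) in *.
    replace (m ^ 2) with (m * m) by ring.
    rewrite !S_INR in *.
    set (X := INR a' + 1) in *. set (Y := INR b' + 1) in *.
    assert (HX: 1 <= X) by (unfold X; pose proof (pos_INR a'); lra).
    assert (HY: 1 <= Y) by (unfold Y; pose proof (pos_INR b'); lra).
    assert (Hs: X + Y <= m - 1) by (unfold X, Y in *; lra).
    assert (Key: X * Y + (X + 1) * (Y + 1) <= 2 * (m * m)) by nra.
    replace ((1 - q) * (P * (m * m) * (X + 1) * (Y + 1)))
      with (P * (m * m) * (X + 1) * (Y + 1) - (q * (m * m)) * (P * (X + 1) * (Y + 1))) by ring.
    rewrite HqM.
    replace (INR a') with (X - 1) by (unfold X; lra).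
    replace (INR b') with (Y - 1) by (unfold Y; lra).
    nra.
Qed.

Lemma abs3 x y z : Rabs (/ 2 * (x + y + z)) <= / 2 * (Rabs x + Rabs y + Rabs z).
Proof.
  rewrite Rabs_mult. rewrite Rabs_right by lra.
  apply Rmult_le_compat_l; [lra|].
  eapply Rle_trans; [apply Rabs_triang|]. pose proof (Rabs_triang x y). lra.
Qed.

Lemma Bop_mono L g M : 0 <= M ->
  (forall a b, (a + b <= L)%nat -> Rabs (g a b) <= M * om L a b) ->
  forall a b, (a + b <= L)%nat -> Rabs (Bop g a b) <= M * Bop (om L) a b.
Proof.
  intros HM H a b Hab. eapply Rle_trans; [apply abs3|]. unfold Bop.
  destruct a as [|a']; destruct b as [|b']; rewrite ?Rabs_R0.
  - lra.
  - pose proof (H 1%nat b' ltac:(lia)). lra.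
  - pose proof (H a' 1%nat ltac:(lia)). lra.
  - pose proof (H (S (S a')) b' ltac:(lia)). pose proof (H a' b' ltac:(lia)).
    pose proof (H a' (S (S b')) ltac:(lia)). lra.
Qed.

Lemma le_sum f n i : (forall j, 0 <= f j) -> (i <= n)%nat -> f i <= sum_f_R0 f n.
Proof.
  intros Hf Hi. induction n.
  - assert (i = 0%nat) by lia. subst. simpl. lra.
  - destruct (Nat.eq_dec i (S n)) as [->|Hne].
    + rewrite tech5. pose proof (cond_pos_sum f n Hf). lra.
    + rewrite tech5. pose proof (Hf (S n)). specialize (IHn ltac:(lia)). lra.
Qed.

Definition Kb t L := sum_f_R0 (fun a => sum_f_R0 (fun b => Rabs (Vf t a b)) L) L.

Lemma Kb_bound t L a b : (a + b <= L)%nat -> Rabs (Vf t a b) <= Kb t L * om L a b.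
Proof.
  intros H. pose proof (om_ge1 L a b).
  assert (Rabs (Vf t a b) <= Kb t L).
  { unfold Kb. eapply Rle_trans.
    2:{ apply (le_sum (fun a => sum_f_R0 (fun b => Rabs (Vf t a b)) L) L a).
        intros j. apply cond_pos_sum. intros; apply Rabs_pos. lia. }
    apply (le_sum (fun b => Rabs (Vf t a b))). intros; apply Rabs_pos. lia. }
  assert (0 <= Kb t L) by (pose proof (Rabs_pos (Vf t a b)); lra).
  nra.
Qed.

Lemma Kb_nonneg t L : 0 <= Kb t L.
Proof. unfold Kb. apply cond_pos_sum. intros. apply cond_pos_sum. intros; apply Rabs_pos. Qed.

Lemma Bn_bound t L N : forall a b, (a + b <= L)%nat ->
  Rabs (Bn N (Vf t) a b) <= Kb t L * ccL L ^ N * om L a b.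
Proof.
  induction N; intros a b Hab.
  - simpl. rewrite Rmult_1_r. apply Kb_bound; auto.
  - simpl Bn. pose proof (cc_bounds L) as [Hc0 Hc1]. pose proof (Kb_nonneg t L).
    assert (0 <= Kb t L * ccL L ^ N) by (apply Rmult_le_pos; auto; apply pow_le; auto).
    eapply Rle_trans. apply (Bop_mono L _ _ H0 IHN a b Hab).
    pose proof (Bop_om L a b Hab). simpl pow.
    replace (Kb t L * (ccL L * ccL L ^ N) * om L a b) with (Kb t L * ccL L ^ N * (ccL L * om L a b)) by ring.
    apply Rmult_le_compat_l; auto.
Qed.

Lemma abs_between x B : Rabs x <= B -> - B <= x <= B.
Proof. unfold Rabs. destruct (Rcase_abs x); lra. Qed.

Theorem walk_series t (HI : HypI t) a0 b0 :
  is_series (fun n => wr n a0 b0) (Vf t a0 b0).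
Proof.
  set (L := (a0 + b0)%nat).
  assert (Hlim : is_lim_seq (fun N => Bn (S N) (Vf t) a0 b0) 0).
  { pose proof (cc_bounds L) as [Hc0 Hc1].
    set (K := Kb t L * om L a0 b0).
    assert (HK: 0 <= K) by (unfold K; pose proof (Kb_nonneg t L); pose proof (om_ge1 L a0 b0); nra).
    assert (Hg : is_lim_seq (fun N => K * ccL L ^ N) 0).
    { replace (Finite 0) with (Rbar_mult K 0) by (simpl; f_equal; ring).
      apply is_lim_seq_scal_l. apply is_lim_seq_geom. rewrite Rabs_right; lra. }
    apply (is_lim_seq_le_le (fun N => - (K * ccL L ^ N)) _ (fun N => K * ccL L ^ N)).
    - intros N. pose proof (Bn_bound t L (S N) a0 b0 (le_n _)).
      assert (ccL L ^ S N <= ccL L ^ N). { simpl. pose proof (pow_le _ N Hc0). nra. }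
      assert (Rabs (Bn (S N) (Vf t) a0 b0) <= K * ccL L ^ N).
      { unfold K. pose proof (Kb_nonneg t L). pose proof (om_ge1 L a0 b0).
        eapply Rle_trans; [apply H|].
        replace (Kb t L * ccL L ^ S N * om L a0 b0) with ((Kb t L * om L a0 b0) * ccL L ^ S N) by ring.
        replace (Kb t L * om L a0 b0 * ccL L ^ N) with ((Kb t L * om L a0 b0) * ccL L ^ N) by ring.
        apply Rmult_le_compat_l; auto; nra. }
      apply abs_between; auto.
    - replace (Finite 0) with (Rbar_opp 0) by (simpl; f_equal; ring).
      apply (is_lim_seq_opp (fun N => K * ccL L ^ N)). exact Hg.
    - exact Hg. }
  assert (H2: is_lim_seq (sum_n (fun n => wr n a0 b0)) (Vf t a0 b0)).
  { apply is_lim_seq_ext with (fun N => Vf t a0 b0 - Bn (S N) (Vf t) a0 b0).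
    { intros N. rewrite (partial_sums t HI). reflexivity. }
    replace (Finite (Vf t a0 b0)) with (Finite (Vf t a0 b0 - 0)) by (f_equal; ring).
    apply is_lim_seq_minus'; auto. apply is_lim_seq_const. }
  exact H2.
Qed.

Definition bnd (a : nat -> R) (r M : R) := forall n, Rabs (a n) * r ^ n <= M.

Lemma bnd_M_nonneg a r M : bnd a r M -> 0 <= M.
Proof. intros H. specialize (H 0%nat). simpl in H. pose proof (Rabs_pos (a 0%nat)). lra. Qed.

Lemma rad_lemma a r M : 0 < r -> bnd a r M -> forall x, Rabs x < r -> Rbar_lt (Rabs x) (CV_radius a).
Proof.
  intros Hr Hb x Hx. destruct (CV_radius_bounded a) as [Hub _].
  assert (Rbar_le r (CV_radius a)).
  { apply Hub. exists M. intros n. rewrite Rabs_mult, <- RPow_abs, (Rabs_right r) by lra. apply Hb. }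
  eapply Rbar_lt_le_trans; [|exact H]. simpl. exact Hx.
Qed.

Lemma rad_pos a r M : 0 < r -> bnd a r M -> Rbar_lt 0 (CV_radius a).
Proof. intros Hr Hb. pose proof (rad_lemma a r M Hr Hb 0 ltac:(rewrite Rabs_R0; lra)). rewrite Rabs_R0 in H. exact H. Qed.

Lemma INR_le_pow2 n : INR (S n) <= 2 ^ n.
Proof. induction n. simpl; lra. rewrite S_INR. simpl. pose proof (pow_R1_Rle 2 n ltac:(lra)). simpl in IHn. lra. Qed.

Lemma mult_bnd a b r Ma Mb : 0 < r -> bnd a r Ma -> bnd b r Mb -> bnd (PS_mult a b) (r / 2) (Ma * Mb).
Proof.
  intros Hr Ha Hb n. pose proof (bnd_M_nonneg _ _ _ Ha). pose proof (bnd_M_nonneg _ _ _ Hb).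
  unfold PS_mult.
  assert (H1: sum_f_R0 (fun k => Rabs (a k) * Rabs (b (n - k)%nat)) n * r ^ n <= INR (S n) * (Ma * Mb)).
  { rewrite Rmult_comm, scal_sum.
    rewrite (sum_eq _ (fun k => (Rabs (a k) * r ^ k) * (Rabs (b (n - k)%nat) * r ^ (n - k)))).
    - eapply Rle_trans. apply (sum_Rle _ (fun _ => Ma * Mb)).
      + intros k Hk. apply Rmult_le_compat; auto.
        apply Rmult_le_pos; [apply Rabs_pos|apply pow_le; lra].
        apply Rmult_le_pos; [apply Rabs_pos|apply pow_le; lra].
      + rewrite sum_cte. lra.
    - intros k Hk. assert (E: r ^ n = r ^ k * r ^ (n - k)) by (rewrite <- pow_add; f_equal; lia). rewrite E. ring. }
  eapply Rle_trans.
  { apply Rmult_le_compat_r. apply pow_le; lra. apply sum_f_R0_triangle. }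
  rewrite (sum_eq (fun i => Rabs (a i * b (n - i)%nat)) (fun k => Rabs (a k) * Rabs (b (n - k)%nat)))
    by (intros; apply Rabs_mult).
  unfold Rdiv. rewrite Rpow_mult_distr, pow_inv.
  pose proof (INR_le_pow2 n). assert (0 < 2 ^ n) by (apply pow_lt; lra).
  set (S0 := sum_f_R0 _ n) in *.
  assert (S0 * r ^ n * / 2 ^ n <= INR (S n) * (Ma * Mb) * / 2 ^ n).
  { apply Rmult_le_compat_r; auto. apply Rlt_le, Rinv_0_lt_compat; auto. }
  assert (INR (S n) * (Ma * Mb) * / 2 ^ n <= Ma * Mb).
  { apply (Rmult_le_reg_r (2 ^ n)); auto. replace (INR (S n) * (Ma * Mb) * / 2 ^ n * 2 ^ n) with (INR (S n) * (Ma * Mb)) by (field; lra). assert (0 <= Ma * Mb) by nra. nra. }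
  replace (S0 * (r ^ n * / 2 ^ n)) with (S0 * r ^ n * / 2 ^ n) by ring. lra.
Qed.

Fixpoint invF (c : nat -> R) (n : nat) : nat -> R :=
  match n with
  | 0%nat => fun j => 1
  | S n' => fun j => if (j <=? n')%nat then invF c n' j
                    else - sum_f_R0 (fun i => invF c n' i * c (S n' - i)%nat) n'
  end.
Definition inv (c : nat -> R) (n : nat) : R := invF c n n.

Lemma invF_stable c : forall n j, (j <= n)%nat -> invF c n j = inv c j.
Proof.
  induction n; intros j Hj.
  - assert (j = 0%nat) by lia. subst. reflexivity.
  - destruct (Nat.eq_dec j (S n)) as [->|Hne]; [reflexivity|].
    simpl. destruct (Nat.leb_spec j n); [|lia]. apply IHn; lia.
Qed.

Lemma inv_0 c : inv c 0 = 1.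
Proof. reflexivity. Qed.

Lemma inv_S c n : inv c (S n) = - sum_f_R0 (fun i => inv c i * c (S n - i)%nat) n.
Proof.
  unfold inv at 1. cbn [invF]. rewrite (proj2 (Nat.leb_gt (S n) n) ltac:(lia)).
  f_equal. apply sum_eq. intros i Hi. rewrite invF_stable by lia. reflexivity.
Qed.

Definition dl0 (n : nat) : R := match n with 0%nat => 1 | _ => 0 end.

Lemma inv_mult c : c 0%nat = 1 -> forall n, PS_mult (inv c) c n = dl0 n.
Proof.
  intros Hc [|n].
  - unfold PS_mult. simpl. rewrite Hc. unfold inv. simpl. ring.
  - unfold PS_mult. rewrite tech5. rewrite inv_S. replace (S n - S n)%nat with 0%nat by lia.
    rewrite Hc. simpl dl0. ring.
Qed.

Lemma sum_rev f n : sum_f_R0 (fun i => f (n - i)%nat) n = sum_f_R0 f n.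
Proof.
  induction n.
  - reflexivity.
  - rewrite decomp_sum by lia. simpl pred. rewrite tech5. rewrite Nat.sub_0_r.
    rewrite <- IHn. simpl. ring.
Qed.

Lemma inv_bound c : c 0%nat = 1 -> (forall n, sum_f_R0 (fun i => Rabs (c (S i))) n <= 1) ->
  forall n, Rabs (inv c n) <= 1.
Proof.
  intros Hc Hs n. induction n as [n IH] using (well_founded_induction lt_wf).
  destruct n as [|n].
  - rewrite inv_0, Rabs_R1. lra.
  - rewrite inv_S, Rabs_Ropp. eapply Rle_trans; [apply sum_f_R0_triangle|].
    eapply Rle_trans.
    + apply (sum_Rle _ (fun i => Rabs (c (S n - i)%nat))).
      intros i Hi. rewrite Rabs_mult. pose proof (IH i ltac:(lia)).
      pose proof (Rabs_pos (c (S n - i)%nat)). pose proof (Rabs_pos (inv c i)). nra.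
    + pose proof (Hs n) as Hsn. rewrite <- (sum_rev (fun i => Rabs (c (S i))) n) in Hsn.
      erewrite sum_eq; [exact Hsn|].
      intros i Hi. simpl. replace (S (n - i)) with (S n - i)%nat by lia. reflexivity.
Qed.

Lemma bnd_1 a : (forall n, Rabs (a n) <= 1) -> bnd a 1 1.
Proof. intros H n. rewrite pow1. rewrite Rmult_1_r. auto. Qed.

Lemma is_series_of_lim (a : nat -> R) (l : R) : is_lim_seq (sum_n a) l -> is_series a l.
Proof. intros H; exact H. Qed.

Lemma is_pseries_fin a N x : (forall n, (N < n)%nat -> a n = 0) ->
  is_pseries a x (sum_f_R0 (fun n => a n * x ^ n) N).
Proof.
  intros H. apply is_pseries_R. apply is_series_of_lim.
  apply (is_lim_seq_ext_loc (fun _ => sum_f_R0 (fun n => a n * x ^ n) N)).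
  - exists N. intros n Hn. rewrite sum_n_Reals.
    induction Hn. reflexivity. rewrite tech5. rewrite H by lia. rewrite IHHn. ring.
  - apply is_lim_seq_const.
Qed.

Lemma is_pseries_dl0 x : is_pseries dl0 x 1.
Proof.
  replace 1 with (sum_f_R0 (fun n => dl0 n * x ^ n) 0) by (simpl; ring).
  apply is_pseries_fin. intros [|n] Hn; [lia|reflexivity].
Qed.

Lemma ps_plus a b x la lb : is_pseries a x la -> is_pseries b x lb -> is_pseries (fun n => a n + b n) x (la + lb).
Proof. intros Ha Hb. exact (is_pseries_plus a b x la lb Ha Hb). Qed.

Lemma ps_minus a b x la lb : is_pseries a x la -> is_pseries b x lb -> is_pseries (fun n => a n - b n) x (la - lb).
Proof. intros Ha Hb. exact (is_pseries_minus a b x la lb Ha Hb). Qed.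

Lemma ps_scal k a x l : is_pseries a x l -> is_pseries (fun n => k * a n) x (k * l).
Proof. intros Ha. apply (is_pseries_scal k a x l). unfold mult; simpl; ring. exact Ha. Qed.

Lemma ps_dil k a x l : is_pseries a (k * x) l -> is_pseries (fun n => k ^ n * a n) x l.
Proof.
  intros H. apply is_pseries_R in H. apply is_pseries_R.
  eapply is_series_ext; [|exact H]. intros n. simpl. rewrite Rpow_mult_distr. ring.
Qed.

Lemma ps_incr a x l : is_pseries a x l -> is_pseries (fun n => match n with 0%nat => 0 | S k => a k end) x (x * l).
Proof. intros H. exact (is_pseries_incr_1 a x l H). Qed.

Lemma locally0 (r : R) (P : R -> Prop) : 0 < r -> (forall t, Rabs t < r -> P t) -> locally 0 P.
Proof.
  intros Hr H. exists (mkposreal r Hr). intros t Ht. apply H.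
  change (Rabs (t + - 0) < r) in Ht. rewrite Ropp_0, Rplus_0_r in Ht. exact Ht.
Qed.

Lemma deriv_coef f a r M n : 0 < r -> bnd a r M -> (forall x, Rabs x < r -> f x = PSeries a x) ->
  Derive_n f n 0 = a n * INR (fact n).
Proof.
  intros Hr Hb H. rewrite (Derive_n_ext_loc f (PSeries a)).
  - apply Derive_n_coef. eapply rad_pos; eauto.
  - apply (locally0 r); auto.
Qed.

Lemma ps_unique a b r Ma Mb : 0 < r -> bnd a r Ma -> bnd b r Mb ->
  (forall x, Rabs x < r -> PSeries a x = PSeries b x) -> forall n, a n = b n.
Proof.
  intros Hr Ha Hb H n. apply PSeries_ext_recip.
  - eapply rad_pos; eauto.
  - eapply rad_pos; eauto.
  - apply (locally0 r); auto.
Qed.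

Lemma PSeries_of a x l : is_pseries a x l -> PSeries a x = l.
Proof. apply is_pseries_unique. Qed.

Lemma ps_of_bnd a r M x : 0 < r -> bnd a r M -> Rabs x < r -> is_pseries a x (PSeries a x).
Proof. intros. apply PSeries_correct. apply CV_radius_inside. eapply rad_lemma; eauto. Qed.

Lemma ps_mult a b r Ma Mb x : 0 < r -> bnd a r Ma -> bnd b r Mb -> Rabs x < r ->
  PSeries (PS_mult a b) x = PSeries a x * PSeries b x.
Proof. intros. apply PSeries_mult; eapply rad_lemma; eauto. Qed.

Lemma bnd_mono a r r' M : 0 <= r' <= r -> bnd a r M -> bnd a r' M.
Proof. intros Hr H n. eapply Rle_trans; [|apply H]. apply Rmult_le_compat_l. apply Rabs_pos.
  apply pow_incr. lra. Qed.

Lemma ps_zero (x : R) : is_pseries (fun _ : nat => 0) x 0.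
Proof.
  pose proof (is_pseries_fin (fun _ : nat => 0) 0 x ltac:(auto)) as H.
  simpl in H. replace (0 * 1) with 0 in H by ring. exact H.
Qed.

Definition sc (n : nat) : R := if Nat.even n then 0 else (-1) ^ (Nat.div2 n) / INR (fact n).
Definition cc (n : nat) : R := if Nat.even n then (-1) ^ (Nat.div2 n) / INR (fact n) else 0.
Definition ex (n : nat) : R := / INR (fact n).

Lemma even_dbl' m : Nat.even (2 * m) = true.
Proof. apply Nat.even_spec. exists m. reflexivity. Qed.
Lemma even_dbl1' m : Nat.even (2 * m + 1) = false.
Proof. rewrite Nat.even_add. rewrite even_dbl'. reflexivity. Qed.
Lemma div2_dbl1 m : Nat.div2 (2 * m + 1) = m.
Proof. rewrite Nat.add_1_r. apply Nat.div2_succ_double. Qed.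

Lemma sc_even m : sc (2 * m) = 0.
Proof. unfold sc. rewrite even_dbl'. reflexivity. Qed.
Lemma sc_odd m : sc (2 * m + 1) = (-1) ^ m / INR (fact (2 * m + 1)).
Proof. unfold sc. rewrite even_dbl1', div2_dbl1. reflexivity. Qed.
Lemma cc_even m : cc (2 * m) = (-1) ^ m / INR (fact (2 * m)).
Proof. unfold cc. rewrite even_dbl', Nat.div2_double. reflexivity. Qed.
Lemma cc_odd m : cc (2 * m + 1) = 0.
Proof. unfold cc. rewrite even_dbl1'. reflexivity. Qed.

Lemma fact_pos_R n : 0 < INR (fact n).
Proof. apply lt_0_INR. apply lt_O_fact. Qed.

Lemma abs_sgn_fact k n : Rabs ((-1) ^ k / INR (fact n)) <= 1.
Proof.
  unfold Rdiv. rewrite Rabs_mult, pow_1_abs, Rabs_inv, Rabs_right by (apply Rle_ge, Rlt_le, fact_pos_R).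
  rewrite Rmult_1_l. pose proof (fact_pos_R n).
  assert (1 <= INR (fact n)) by (apply (le_INR 1); apply lt_O_fact).
  rewrite <- Rinv_1. apply Rinv_le_contravar; lra.
Qed.

Lemma sc_le1 n : Rabs (sc n) <= 1.
Proof. unfold sc. destruct (Nat.even n). rewrite Rabs_R0; lra. apply abs_sgn_fact. Qed.
Lemma cc_le1 n : Rabs (cc n) <= 1.
Proof. unfold cc. destruct (Nat.even n). apply abs_sgn_fact. rewrite Rabs_R0; lra. Qed.
Lemma ex_le1 n : Rabs (ex n) <= 1.
Proof. unfold ex. pose proof (abs_sgn_fact 0 n). simpl in H. unfold Rdiv in H. rewrite Rmult_1_l in H. exact H. Qed.

Lemma sin_ps x : is_pseries sc x (sin x).
Proof.
  unfold sin. destruct (exist_sin (Rsqr x)) as [l Hl].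
  unfold sin_in in Hl. apply is_series_Reals in Hl.
  replace (x * l) with (0 + x * l) by ring.
  apply is_pseries_odd_even.
  - apply (is_pseries_ext (fun _ => 0)). intros n. rewrite sc_even. reflexivity.
    apply ps_zero.
  - apply is_pseries_R. rewrite <- Rsqr_pow2. eapply is_series_ext; [|exact Hl].
    intros n. rewrite sc_odd. unfold sin_n. reflexivity.
Qed.

Lemma cos_ps x : is_pseries cc x (cos x).
Proof.
  unfold cos. destruct (exist_cos (Rsqr x)) as [l Hl].
  unfold cos_in in Hl. apply is_series_Reals in Hl.
  replace l with (l + x * 0) by ring.
  apply is_pseries_odd_even.
  - apply is_pseries_R. rewrite <- Rsqr_pow2. eapply is_series_ext; [|exact Hl].
    intros n. rewrite cc_even. unfold cos_n. reflexivity.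
  - apply (is_pseries_ext (fun _ => 0)). intros n. rewrite cc_odd. reflexivity.
    apply ps_zero.
Qed.

Lemma exp_ps x : is_pseries ex x (exp x).
Proof. apply is_exp_Reals. Qed.

Definition g2 (i : nat) : R := match i with 0%nat => 0 | _ => (/2) ^ i end.

Lemma sum_g2 n : sum_f_R0 g2 n = 1 - (/2) ^ n.
Proof. induction n. simpl. lra. rewrite tech5, IHn. unfold g2. simpl. lra. Qed.

Lemma sum_g2_le n : sum_f_R0 g2 n <= 1.
Proof. rewrite sum_g2. pose proof (pow_le (/2) n ltac:(lra)). lra. Qed.

Lemma fact_ge_pow n : 2 ^ n <= INR (fact (S n)).
Proof.
  induction n. simpl. lra.
  replace (fact (S (S n))) with (S (S n) * fact (S n))%nat by reflexivity.
  rewrite mult_INR. simpl pow. rewrite !S_INR. pose proof (pos_INR n). pose proof (pow_le 2 n ltac:(lra)). pose proof (fact_pos_R (S n)). nra.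
Qed.

Lemma inv_fact_le n : / INR (fact (S n)) <= (/2) ^ n.
Proof. rewrite pow_inv. apply Rinv_le_contravar. apply pow_lt; lra. apply fact_ge_pow. Qed.

Lemma abs_sgn_fact' k n : Rabs ((-1) ^ k / INR (fact n)) = / INR (fact n).
Proof. unfold Rdiv. rewrite Rabs_mult, pow_1_abs, Rmult_1_l, Rabs_inv, Rabs_right by (apply Rle_ge, Rlt_le, fact_pos_R). reflexivity. Qed.

Lemma g2_nonneg i : 0 <= g2 i.
Proof. destruct i; simpl; [lra|]. apply Rmult_le_pos; [lra|apply pow_le; lra]. Qed.

Lemma cc_hyp n : sum_f_R0 (fun i => Rabs (cc (S i))) n <= 1.
Proof.
  eapply Rle_trans; [|apply (sum_g2_le n)]. apply sum_Rle. intros i _.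
  destruct (Nat.Even_or_Odd (S i)) as [[m Hm]|[m Hm]].
  - rewrite Hm, cc_even, abs_sgn_fact'. rewrite <- Hm. destruct i as [|i]; [lia|].
    apply inv_fact_le.
  - rewrite Hm, cc_odd, Rabs_R0. apply g2_nonneg.
Qed.

Definition e1 (n : nat) : R := / INR (fact (S n)).

Lemma e1_hyp n : sum_f_R0 (fun i => Rabs (e1 (S i))) n <= 1.
Proof.
  eapply Rle_trans; [|apply (sum_g2_le (S n))].
  rewrite (decomp_sum g2 (S n)) by lia. simpl pred. simpl (g2 0). rewrite Rplus_0_l.
  apply sum_Rle. intros i _. unfold e1. rewrite Rabs_right by (apply Rle_ge, Rlt_le, Rinv_0_lt_compat, fact_pos_R).
  apply inv_fact_le.
Qed.

Lemma e1_le1 n : Rabs (e1 n) <= 1.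
Proof. unfold e1. pose proof (ex_le1 (S n)). exact H. Qed.

Definition sig := inv cc.
Definition tau := PS_mult sc sig.

Lemma cc_0 : cc 0%nat = 1.
Proof. unfold cc. simpl. field. Qed.

Lemma sig_le1 n : Rabs (sig n) <= 1.
Proof. apply inv_bound. apply cc_0. apply cc_hyp. Qed.

Lemma bnd_sc : bnd sc 1 1. Proof. apply bnd_1, sc_le1. Qed.
Lemma bnd_cc : bnd cc 1 1. Proof. apply bnd_1, cc_le1. Qed.
Lemma bnd_sig : bnd sig 1 1. Proof. apply bnd_1, sig_le1. Qed.
Lemma bnd_tau : bnd tau (1/2) (1 * 1). Proof. apply mult_bnd; [lra|apply bnd_sc|apply bnd_sig]. Qed.

Lemma cos_sig x : Rabs x < 1 -> cos x * PSeries sig x = 1.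
Proof.
  intros Hx.
  rewrite <- (PSeries_of cc x (cos x)) by apply cos_ps.
  rewrite Rmult_comm. rewrite <- (ps_mult sig cc 1 1 1 x) by (auto; try lra; try apply bnd_sig; apply bnd_cc).
  rewrite (PSeries_ext _ dl0) by (apply inv_mult, cc_0).
  apply PSeries_of. apply is_pseries_dl0.
Qed.

Lemma tan_ps x : Rabs x < 1/2 -> tan x = PSeries tau x.
Proof.
  intros Hx. pose proof (cos_sig x ltac:(lra)) as Hc.
  assert (cos x <> 0) by (intro E; rewrite E in Hc; lra).
  unfold tau. rewrite (ps_mult sc sig 1 1 1 x) by (auto; try lra; try apply bnd_sig; apply bnd_sc).
  rewrite (PSeries_of sc x (sin x)) by apply sin_ps.
  unfold tan. replace (PSeries sig x) with (/ cos x) by (field_simplify_eq; auto; lra).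
  field. auto.
Qed.

Lemma tangent_number_tau k : tangent_number k = tau (2 * k + 1)%nat * INR (fact (2 * k + 1)).
Proof.
  unfold tangent_number. apply (deriv_coef tan tau (1/2) (1*1)); [lra|apply bnd_tau|].
  intros x Hx. apply tan_ps. exact Hx.
Qed.

Definition s2 (n : nat) : R := 2 ^ n * sc n.
Definition d2 (n : nat) : R := dl0 n - 2 ^ n * cc n.

Lemma bnd_s2 : bnd s2 (1/2) 1.
Proof. intros n. unfold s2. rewrite Rabs_mult, Rabs_right by (apply Rle_ge, pow_le; lra).
  replace (2 ^ n * Rabs (sc n) * (1 / 2) ^ n) with (Rabs (sc n) * (2 * (1/2)) ^ n) by (rewrite Rpow_mult_distr; ring).
  replace (2 * (1/2)) with 1 by lra. rewrite pow1. pose proof (sc_le1 n). lra. Qed.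

Lemma bnd_d2 : bnd d2 (1/2) 2.
Proof. intros n. unfold d2. eapply Rle_trans. apply Rmult_le_compat_r. apply pow_le; lra. apply Rabs_triang.
  rewrite Rabs_Ropp, Rabs_mult, (Rabs_right (2 ^ n)) by (apply Rle_ge, pow_le; lra).
  replace ((Rabs (dl0 n) + 2 ^ n * Rabs (cc n)) * (1 / 2) ^ n) with (Rabs (dl0 n) * (1/2)^n + Rabs (cc n) * (2 * (1/2)) ^ n) by (rewrite Rpow_mult_distr; ring).
  replace (2 * (1/2)) with 1 by lra. rewrite pow1. pose proof (cc_le1 n).
  assert (Rabs (dl0 n) * (1/2)^n <= 1).
  { destruct n; simpl; [rewrite Rabs_R1; lra|]. rewrite Rabs_R0. pose proof (pow_le (1/2) n). nra. }
  lra. Qed.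

Lemma tan_identity : forall n, PS_mult tau s2 n = d2 n.
Proof.
  apply (ps_unique _ _ (1/4) (1 * 1 * 1) 2); [lra| | |].
  - replace (1/4) with ((1/2)/2) by lra. apply mult_bnd; [lra|apply bnd_tau|apply bnd_s2].
  - apply (bnd_mono _ (1/2)); [lra|apply bnd_d2].
  - intros x Hx. rewrite (ps_mult tau s2 (1/2) (1*1) 1 x) by (auto; try lra; try apply bnd_tau; apply bnd_s2).
    rewrite <- tan_ps by lra.
    rewrite (PSeries_of s2 x (sin (2 * x))) by (apply ps_dil; apply sin_ps).
    rewrite (PSeries_of d2 x (1 - cos (2 * x))) by (apply ps_minus; [apply is_pseries_dl0|apply ps_dil; apply cos_ps]).
    pose proof (cos_sig x ltac:(lra)) as Hc.
    assert (cos x <> 0) by (intro E; rewrite E in Hc; lra).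
    rewrite sin_2a, cos_2a_sin. unfold tan. field. auto.
Qed.

Definition bet := inv e1.

Lemma e1_0 : e1 0%nat = 1.
Proof. unfold e1. simpl. field. Qed.

Lemma bet_le1 n : Rabs (bet n) <= 1.
Proof. apply inv_bound. apply e1_0. apply e1_hyp. Qed.

Lemma bnd_e1 : bnd e1 1 1. Proof. apply bnd_1, e1_le1. Qed.
Lemma bnd_bet : bnd bet 1 1. Proof. apply bnd_1, bet_le1. Qed.

Lemma exp_m1 x : Rabs x < 1 -> exp x - 1 = x * PSeries e1 x.
Proof.
  intros Hx.
  assert (H1: is_pseries (fun n => match n with 0%nat => 0 | S k => e1 k end) x (x * PSeries e1 x)).
  { apply ps_incr. apply (ps_of_bnd e1 1 1); auto; [lra|apply bnd_e1]. }
  assert (H2: is_pseries (fun n => ex n - dl0 n) x (exp x - 1)).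
  { apply ps_minus. apply exp_ps. apply is_pseries_dl0. }
  apply PSeries_of in H1. apply PSeries_of in H2.
  rewrite <- H1, <- H2. apply PSeries_ext. intros [|n]; unfold ex, e1, dl0; simpl; [field|ring].
Qed.

Lemma bern_ps x : Rabs x < 1 -> bern_gf x = PSeries bet x.
Proof.
  intros Hx. unfold bern_gf. destruct (Req_EM_T x 0) as [->|Hne].
  - rewrite PSeries_0. reflexivity.
  - rewrite exp_m1 by auto.
    assert (Hm: PSeries e1 x * PSeries bet x = 1).
    { rewrite Rmult_comm, <- (ps_mult bet e1 1 1 1 x) by (auto; try lra; try apply bnd_bet; apply bnd_e1).
      rewrite (PSeries_ext _ dl0) by (apply inv_mult, e1_0).
      apply PSeries_of. apply is_pseries_dl0. }
    assert (PSeries e1 x <> 0) by (intro E; rewrite E in Hm; lra).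
    replace (PSeries bet x) with (/ PSeries e1 x) by (field_simplify_eq; auto; lra).
    field. auto.
Qed.

Lemma bernoulli_bet n : bernoulli n = bet n * INR (fact n).
Proof.
  unfold bernoulli. apply (deriv_coef bern_gf bet 1 1); [lra|apply bnd_bet|].
  intros x Hx. apply bern_ps. exact Hx.
Qed.

Definition h1 (n : nat) : R := match n with 1%nat => / 2 | _ => 0 end.
Definition ell (n : nat) : R := 2 ^ n * bet n - bet n + h1 n.
Definition shc (n : nat) : R := if Nat.even n then 0 else / INR (fact n).
Definition chc (n : nat) : R := if Nat.even n then / INR (fact n) else 0.
Definition rr (n : nat) : R := match n with 0%nat => 0 | S k => (chc k - dl0 k) / 2 end.

Lemma h1_ps x : is_pseries h1 x (x / 2).
Proof.
  replace (x / 2) with (sum_f_R0 (fun n => h1 n * x ^ n) 1) by (simpl; field).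
  apply is_pseries_fin. intros [|[|n]] Hn; try lia; reflexivity.
Qed.

Lemma expm_ps x : is_pseries (fun n => (-1) ^ n * ex n) x (exp (- x)).
Proof. apply ps_dil. replace (-1 * x) with (- x) by ring. apply exp_ps. Qed.

Lemma shc_eq n : / 2 * (ex n - (-1) ^ n * ex n) = shc n.
Proof.
  unfold shc, ex. destruct (Nat.Even_or_Odd n) as [[m ->]|[m ->]].
  + rewrite even_dbl', pow_1_even. ring.
  + rewrite even_dbl1'. replace (2 * m + 1)%nat with (S (2 * m)) by lia. rewrite pow_1_odd.
    field. apply Rgt_not_eq, fact_pos_R.
Qed.

Lemma chc_eq n : / 2 * (ex n + (-1) ^ n * ex n) = chc n.
Proof.
  unfold chc, ex. destruct (Nat.Even_or_Odd n) as [[m ->]|[m ->]].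
  + rewrite even_dbl', pow_1_even. field. apply Rgt_not_eq, fact_pos_R.
  + rewrite even_dbl1'. replace (2 * m + 1)%nat with (S (2 * m)) by lia. rewrite pow_1_odd. ring.
Qed.

Lemma sinh_ps x : is_pseries shc x (sinh x).
Proof.
  unfold sinh. apply (is_pseries_ext (fun n => / 2 * (ex n - (-1) ^ n * ex n))).
  - intros n. apply shc_eq.
  - replace ((exp x - exp (- x)) / 2) with (/ 2 * (exp x - exp (- x))) by field.
    apply ps_scal. apply ps_minus. apply exp_ps. apply expm_ps.
Qed.

Lemma cosh_ps x : is_pseries chc x (cosh x).
Proof.
  unfold cosh. apply (is_pseries_ext (fun n => / 2 * (ex n + (-1) ^ n * ex n))).
  - intros n. apply chc_eq.
  - replace ((exp x + exp (- x)) / 2) with (/ 2 * (exp x + exp (- x))) by field.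
    apply ps_scal. apply ps_plus. apply exp_ps. apply expm_ps.
Qed.

Lemma shc_le1 n : Rabs (shc n) <= 1.
Proof. unfold shc. destruct (Nat.even n). rewrite Rabs_R0; lra. apply (ex_le1 n). Qed.
Lemma chc_le1 n : Rabs (chc n) <= 1.
Proof. unfold chc. destruct (Nat.even n). apply (ex_le1 n). rewrite Rabs_R0; lra. Qed.

Lemma bnd_ell : bnd ell (1/2) 3.
Proof.
  intros n. unfold ell.
  assert (Rabs (2 ^ n * bet n) * (1/2) ^ n <= 1).
  { rewrite Rabs_mult, (Rabs_right (2 ^ n)) by (apply Rle_ge, pow_le; lra).
    replace (2 ^ n * Rabs (bet n) * (1 / 2) ^ n) with (Rabs (bet n) * (2 * (1/2)) ^ n) by (rewrite Rpow_mult_distr; ring).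
    replace (2 * (1/2)) with 1 by lra. rewrite pow1. pose proof (bet_le1 n). lra. }
  assert (Rabs (bet n) * (1/2) ^ n <= 1).
  { pose proof (bet_le1 n). pose proof (pow_le (1/2) n ltac:(lra)).
    assert ((1/2) ^ n <= 1) by (apply (Rle_trans _ (1 ^ n)); [apply pow_incr; lra | rewrite pow1; lra]).
    apply (Rle_trans _ (1 * 1)); [|lra]. apply Rmult_le_compat; auto. apply Rabs_pos. }
  assert (Rabs (h1 n) * (1/2) ^ n <= 1).
  { destruct n as [|[|n]]; simpl; rewrite ?Rabs_R0; try lra.
    rewrite Rabs_right by lra. lra. }
  pose proof (Rabs_triang (2 ^ n * bet n - bet n) (h1 n)).
  pose proof (Rabs_triang (2 ^ n * bet n) (- bet n)). rewrite Rabs_Ropp in H3.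
  pose proof (pow_le (1/2) n ltac:(lra)). unfold Rminus in *. nra.
Qed.

Lemma bnd_shc : bnd shc 1 1. Proof. apply bnd_1, shc_le1. Qed.
Lemma bnd_rr : bnd rr 1 1.
Proof. apply bnd_1. intros [|n]; simpl. rewrite Rabs_R0; lra.
  unfold rr. unfold Rdiv. rewrite Rabs_mult. rewrite (Rabs_right (/2)) by lra.
  pose proof (Rabs_triang (chc n) (- dl0 n)). rewrite Rabs_Ropp in H. pose proof (chc_le1 n).
  assert (Rabs (dl0 n) <= 1) by (destruct n; simpl; rewrite ?Rabs_R1, ?Rabs_R0; lra).
  unfold Rminus. nra. Qed.

Lemma bern_fun_identity x : Rabs x < 1/2 ->
  (bern_gf (2 * x) - bern_gf x + x / 2) * sinh x = x * ((cosh x - 1) / 2).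
Proof.
  intros Hx. unfold bern_gf. destruct (Req_EM_T x 0) as [->|Hne].
  - rewrite Rmult_0_r. destruct (Req_EM_T 0 0); [|lra]. rewrite sinh_0. ring.
  - destruct (Req_EM_T (2 * x) 0) as [E|_]; [lra|].
    unfold sinh, cosh. rewrite exp_Ropp.
    replace (2 * x) with (x + x) by ring. rewrite exp_plus.
    set (E := exp x).
    assert (HE: 0 < E) by apply exp_pos.
    assert (HE1: E <> 1).
    { intro H1. apply Hne. apply exp_inv. rewrite exp_0. exact H1. }
    assert (E - 1 <> 0) by lra.
    assert (E * E - 1 <> 0).
    { replace (E * E - 1) with ((E - 1) * (E + 1)) by ring. apply Rmult_integral_contrapositive. split; lra. }
    field. repeat split; lra.
Qed.

Lemma bern_identity : forall n, PS_mult ell shc n = rr n.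
Proof.
  assert (Hsh: bnd shc (1/2) 1) by (apply (bnd_mono _ 1); [lra|apply bnd_shc]).
  apply (ps_unique _ _ (1/4) (3 * 1) 1); [lra| | |].
  - replace (1/4) with ((1/2)/2) by lra. apply mult_bnd; [lra|apply bnd_ell|exact Hsh].
  - apply (bnd_mono _ 1); [lra|apply bnd_rr].
  - intros x Hx.
    rewrite (ps_mult ell shc (1/2) 3 1 x) by first [lra | apply bnd_ell | exact Hsh].
    rewrite (PSeries_of shc x (sinh x)) by apply sinh_ps.
    rewrite (PSeries_of rr x (x * ((cosh x - 1) / 2))).
    2:{ apply ps_incr. unfold Rdiv. apply (is_pseries_ext (fun n => / 2 * (chc n - dl0 n))).
        intros n; apply Rmult_comm. rewrite Rmult_comm. apply ps_scal. apply ps_minus. apply cosh_ps. apply is_pseries_dl0. }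
    rewrite (PSeries_of ell x (bern_gf (2 * x) - bern_gf x + x / 2)).
    + apply bern_fun_identity. lra.
    + apply ps_plus; [apply ps_minus|apply h1_ps].
      * apply ps_dil. rewrite bern_ps by (rewrite Rabs_mult, Rabs_right by lra; lra).
        apply (ps_of_bnd bet 1 1); [lra|apply bnd_bet|rewrite Rabs_mult, Rabs_right by lra; lra].
      * rewrite bern_ps by lra. apply (ps_of_bnd bet 1 1); [lra|apply bnd_bet|lra].
Qed.

Lemma sum_pairs F n : sum_f_R0 F (2 * n + 1) = sum_f_R0 (fun i => F (2 * i)%nat + F (2 * i + 1)%nat) n.
Proof.
  induction n.
  - simpl. ring.
  - replace (2 * S n + 1)%nat with (S (S (2 * n + 1))) by lia.
    rewrite !tech5, IHn. replace (S (2 * n + 1)) with (2 * S n)%nat by lia.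
    replace (S (2 * S n)) with (2 * S n + 1)%nat by lia. ring.
Qed.

Lemma Cb_split i j : Cb (2 * (i + j) + 2) (2 * j + 1) =
  INR (fact (2 * (i + j) + 2)) / (INR (fact (2 * j + 1)) * INR (fact (2 * i + 1))).
Proof.
  rewrite Cb_fact by lia. unfold Binomial.C.
  replace (2 * (i + j) + 2 - (2 * j + 1))%nat with (2 * i + 1)%nat by lia. reflexivity.
Qed.

Lemma pow4 j : 4 ^ j = 2 ^ (2 * j).
Proof. rewrite pow_mult. f_equal. ring. Qed.

Lemma fnz n : INR (fact n) <> 0.
Proof. apply Rgt_not_eq, fact_pos_R. Qed.

Definition tT (i : nat) : R := tangent_number i / 4 ^ i.

Lemma HypI_tan : HypI tT.
Proof.
  intros m. pose proof (tan_identity (2 * m + 2)) as Hid.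
  assert (E: forall F, sum_f_R0 F (2 * m + 2) = sum_f_R0 (fun i => F (2 * i)%nat + F (2 * i + 1)%nat) m + F (2 * m + 2)%nat).
  { intros F. replace (2 * m + 2)%nat with (S (2 * m + 1)) by lia. rewrite tech5, sum_pairs. reflexivity. }
  unfold PS_mult in Hid. rewrite E in Hid.
  rewrite Nat.sub_diag in Hid. cbv beta in Hid. replace (s2 0%nat) with 0 in Hid by (unfold s2, sc; simpl; ring).
  rewrite (sum_eq _ (fun i => tau (2 * i + 1)%nat * s2 (2 * m + 2 - (2 * i + 1))%nat)) in Hid.
  2:{ intros i Hi. cbv beta. replace (2 * m + 2 - 2 * i)%nat with (2 * (m + 1 - i))%nat by lia.
      unfold s2. rewrite sc_even. ring. }
  unfold d2 in Hid.
  assert (Ecc: cc (2*m+2)%nat = (-1)^(m+1)/INR(fact(2*m+2))) by (replace (2*m+2)%nat with (2*(m+1))%nat by lia; apply cc_even).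
  rewrite Ecc in Hid. replace (dl0 (2 * m + 2)) with 0 in Hid by (replace (2 * m + 2)%nat with (S (2 * m + 1)) by lia; reflexivity).
  set (K := INR (fact (2 * m + 2)) / (2 * 4 ^ m)).
  unfold A.
  rewrite (sum_eq _ (fun i => (tau (2 * i + 1)%nat * s2 (2 * m + 2 - (2 * i + 1))%nat) * K)).
  - rewrite <- scal_sum.
    replace (sum_f_R0 (fun i => tau (2 * i + 1)%nat * s2 (2 * m + 2 - (2 * i + 1))%nat) m)
      with (sum_f_R0 (fun i => tau (2 * i + 1)%nat * s2 (2 * m + 2 - (2 * i + 1))%nat) m + tau (2 * m + 2)%nat * 0) by ring.
    rewrite Hid. unfold K. rewrite pow4. replace (2 * (m + 1))%nat with (2 * m + 2)%nat by lia.
    replace (2 ^ (2 * m + 2)) with (2 ^ (2 * m) * 4) by (rewrite pow_add; simpl; ring).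
    replace ((-1) ^ (m + 1)) with (- (-1) ^ m) by (rewrite pow_add; simpl; ring).
    field. split. apply fnz. apply pow_nonzero. lra.
  - intros i Hi. unfold tT, K. rewrite tangent_number_tau.
    set (j := (m - i)%nat). replace m with (i + j)%nat by lia.
    replace (2 * (i + j) + 2 - (2 * i + 1))%nat with (2 * j + 1)%nat by lia.
    replace (i + j - i)%nat with j by lia.
    rewrite Cb_split. unfold s2. rewrite sc_odd.
    rewrite !pow4. replace (2 * (i + j) + 2)%nat with (2 * i + 2 * j + 2)%nat by lia.
    replace (2 * (i + j))%nat with (2 * i + 2 * j)%nat by lia.
    rewrite !pow_add.
    assert (2 ^ (2 * i) <> 0) by (apply pow_nonzero; lra).
    assert (2 ^ (2 * j) <> 0) by (apply pow_nonzero; lra).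
    pose proof (fnz (2 * j + 1)). pose proof (fnz (2 * i + 1)).
    field. repeat split; auto.
Qed.

Definition tB (i : nat) : R := bern_coef (2 * i).

Lemma shc_odd j : shc (2 * j + 1) = / INR (fact (2 * j + 1)).
Proof. unfold shc. rewrite even_dbl1'. reflexivity. Qed.
Lemma shc_even j : shc (2 * j) = 0.
Proof. unfold shc. rewrite even_dbl'. reflexivity. Qed.

Lemma HypI_bern : HypI tB.
Proof.
  intros m. pose proof (bern_identity (2 * m + 3)) as Hid.
  assert (E: forall F, sum_f_R0 F (2 * m + 3) = sum_f_R0 (fun i => F (2 * i)%nat + F (2 * i + 1)%nat) (m + 1)).
  { intros F. replace (2 * m + 3)%nat with (2 * (m + 1) + 1)%nat by lia. apply sum_pairs. }
  unfold PS_mult in Hid. rewrite E in Hid.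
  rewrite (sum_eq _ (fun i => ell (2 * i)%nat * shc (2 * m + 3 - 2 * i)%nat)) in Hid.
  2:{ intros i Hi. cbv beta. replace (2 * m + 3 - (2 * i + 1))%nat with (2 * (m + 1 - i))%nat by lia.
      rewrite shc_even. ring. }
  replace (m + 1)%nat with (S m) in Hid by lia.
  rewrite decomp_sum in Hid by lia. simpl pred in Hid.
  replace (ell (2 * 0)%nat) with 0 in Hid by (unfold ell, h1; simpl; ring).
  rewrite Rmult_0_l, Rplus_0_l in Hid.
  replace (rr (2 * m + 3)%nat) with (/ INR (fact (2 * m + 2)) / 2) in Hid.
  2:{ replace (2 * m + 3)%nat with (S (2 * (m + 1))) by lia. unfold rr.
      unfold chc. rewrite even_dbl'. replace (dl0 (2 * (m + 1))) with 0 by (replace (2 * (m + 1))%nat with (S (2 * m + 1)) by lia; reflexivity).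
      replace (fact (2 * (m + 1))) with (fact (2 * m + 2)) by (f_equal; lia). field. apply fnz. }
  set (K := (-1) ^ m * 4 * INR (fact (2 * m + 2))).
  unfold A.
  rewrite (sum_eq _ (fun i => (ell (2 * S i)%nat * shc (2 * m + 3 - 2 * S i)%nat) * K)).
  - rewrite <- scal_sum. rewrite Hid. unfold K. field. apply fnz.
  - intros i Hi. unfold tB, K.
    unfold bern_coef. cbv zeta. rewrite even_dbl', Nat.div2_double.
    rewrite bernoulli_bet.
    set (j := (m - i)%nat). replace m with (i + j)%nat by lia.
    replace (2 * (i + j) + 3 - 2 * S i)%nat with (2 * j + 1)%nat by lia.
    replace (i + j - i)%nat with j by lia.
    rewrite Cb_split. rewrite shc_odd.
    unfold ell. replace (2 * S i)%nat with (S (2 * i + 1)) by lia.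
    replace (h1 (S (2 * i + 1))) with 0 by (replace (2 * i + 1)%nat with (S (2 * i)) by lia; reflexivity).
    replace (2 * i + 2)%nat with (S (2 * i + 1)) by lia.
    rewrite fact_simpl, mult_INR.
    replace (INR (S (2 * i + 1))) with (2 * INR (i + 1)) by (rewrite S_INR, !plus_INR, mult_INR; simpl; ring).
    replace (2 * (i + j) + 2)%nat with (2 * i + 2 * j + 2)%nat by lia.
    rewrite pow_add.
    assert (INR (i + 1) <> 0) by (rewrite plus_INR; simpl; pose proof (pos_INR i); lra).
    pose proof (fnz (2 * j + 1)). pose proof (fnz (2 * i + 1)).
    field. repeat split; auto.
Qed.

Ltac mod2_goal := repeat match goal with
 | |- context [(?x mod 2)%nat] =>
     let d := fresh "d" in let r := fresh "r" in
     generalize (Nat.div_mod_eq x 2) (Nat.mod_upper_bound x 2 ltac:(lia));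
     generalize (x / 2)%nat (x mod 2)%nat; intros d r ? ? end.

Lemma nwalks_parity n : forall a b, nwalks n a b <> 0%nat -> ((a + n) mod 2 = 0 /\ (b + n) mod 2 = 0)%nat.
Proof.
  induction n; intros a b H.
  - rewrite nwalks_0 in H. destruct a; destruct b; try (exfalso; apply H; reflexivity). simpl. auto.
  - rewrite nwalks_S in H.
    destruct b as [|b']; destruct a as [|a']; simpl in H.
    + lia.
    + assert (E: nwalks n a' 1 <> 0%nat) by lia. apply IHn in E. revert E. mod2_goal. lia.
    + assert (E: nwalks n 1 b' <> 0%nat) by lia. apply IHn in E. revert E. mod2_goal. lia.
    + destruct (Nat.eq_dec (nwalks n (S (S a')) b') 0) as [E1|E1].
      * destruct (Nat.eq_dec (nwalks n a' b') 0) as [E2|E2].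
        -- destruct (Nat.eq_dec (nwalks n a' (S (S b'))) 0) as [E3|E3].
           ++ rewrite E1, E2, E3 in H. simpl in H. lia.
           ++ apply IHn in E3. revert E3. mod2_goal. lia.
        -- apply IHn in E2. revert E2. mod2_goal. lia.
      * apply IHn in E1. revert E1. mod2_goal. lia.
Qed.

Lemma nwalks_odd n k : nwalks n (2 * k + 1) 0 = 0%nat.
Proof.
  destruct (Nat.eq_dec (nwalks n (2 * k + 1) 0) 0) as [E|E]; auto.
  apply nwalks_parity in E. revert E. mod2_goal. lia.
Qed.

Lemma neg_half n k : INR (nwalks n (2 * k) 0) * (- (1 / 2)) ^ n = INR (nwalks n (2 * k) 0) * (1 / 2) ^ n.
Proof.
  destruct (Nat.eq_dec (nwalks n (2 * k) 0) 0) as [E|E].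
  - rewrite E. simpl. ring.
  - apply nwalks_parity in E. destruct E as [_ E].
    assert (Hn: exists p, n = (2 * p)%nat).
    { rewrite Nat.add_0_l in E. exists (n / 2)%nat. pose proof (Nat.div_mod_eq n 2). lia. }
    destruct Hn as [p ->]. replace (- (1 / 2)) with (-1 * (1/2)) by ring.
    rewrite Rpow_mult_distr, pow_1_even. ring.
Qed.

Lemma series_zero : is_series (fun _ : nat => 0) 0.
Proof.
  pose proof (ps_zero 0) as H. apply is_pseries_R in H.
  eapply is_series_ext; [|exact H]. intros n. simpl. ring.
Qed.

Lemma walk_even t (HI : HypI t) k : is_series (fun n => INR (nwalks n (2 * k) 0) * (1/2) ^ n) (t k).
Proof.
  pose proof (walk_series t HI (2 * k) 0) as H.
  rewrite (Vf_even t (2 * k) 0 k) in H by lia.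
  rewrite A_small in H by lia. simpl INR in H. rewrite Rmult_1_r in H. exact H.
Qed.

Theorem theorem1p3 :
  (forall t0 : R, (t0 = 1/2 \/ t0 = -(1/2)) ->
     forall i : nat,
       is_series (fun n : nat => INR (nwalks n i 0) * t0 ^ n) (tan_coef i))
  /\
  (forall i : nat,
       is_series (fun n : nat => INR (nwalks n i 0) * (1/2) ^ n) (bern_coef i)).
Proof.
  split.
  - intros t0 Ht0 i. destruct (Nat.Even_or_Odd i) as [[k ->]|[k ->]].
    + unfold tan_coef. rewrite even_dbl', Nat.div2_double.
      pose proof (walk_even tT HypI_tan k) as H. unfold tT in H.
      destruct Ht0 as [->| ->]; [exact H|].
      eapply is_series_ext; [|exact H]. intros n. symmetry. apply neg_half.
    + unfold tan_coef. rewrite even_dbl1'.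
      eapply is_series_ext; [|exact series_zero]. intros n. rewrite nwalks_odd. simpl. ring.
  - intros i. destruct (Nat.Even_or_Odd i) as [[k ->]|[k ->]].
    + exact (walk_even tB HypI_bern k).
    + unfold bern_coef. cbv zeta. rewrite even_dbl1'.
      eapply is_series_ext; [|exact series_zero]. intros n. rewrite nwalks_odd. simpl. ring.
Qed.
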